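(* Let $(E,\mathcal{B})$ be a measurable space and $m$ a $\sigma$-additive measure on $\mathcal{B}$. Consider the assertions: (1) $m$ is finite; (2) $m$ is $\sigma$-finite; (3) $m$ is $\sigma$-principal; (4) $m$ is CCC; (5) $m$ is localizable. Then (1) $\Rightarrow$ (2) $\Rightarrow$ (3) $\Rightarrow$ (4) $\Rightarrow$ (5). Moreover, assuming Zorn's lemma, (4) $\Rightarrow$ (3).
   Context: A $\sigma$-ideal of $\mathcal{B}$ is a nonempty $\mathcal{I}\subset\mathcal{B}$ closed under countable unions and such that $B\subset I\in\mathcal{I}$, $B\in\mathcal{B}$ imply $B\in\mathcal{I}$. $m$ is $\sigma$-principal if for every $\sigma$-ideal $\mathcal{I}$ there is $L\in\mathcal{I}$ with $m(S\setminus L)=0$ for all $S\in\mathcal{I}$. $m$ is CCC if every family of pairwise disjoint elements of $\mathcal{B}$ of positive measure is countable. $m$ is localizable if for every $\sigma$-ideal $\mathcal{I}$ of $\mathcal{B}$ there is $L\in\mathcal{B}$ such that (i) $m(S\setminus L)=0$ for all $S\in\mathcal{I}$, and (ii) whenever $B\in\mathcal{B}$ satisfies $m(S\setminus B)=0$ for all $S\in\mathcal{I}$, then $m(L\setminus B)=0$. *)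

(* Defs.v *)
From mathcomp Require Import all_boot all_order all_algebra.
From mathcomp Require Import all_classical all_reals all_analysis.
Set Implicit Arguments. Unset Strict Implicit. Unset Printing Implicit Defensive.
Import Order.TTheory GRing.Theory Num.Theory.
Local Open Scope classical_set_scope.
Local Open Scope ring_scope.
Local Open Scope ereal_scope.

Section Defs.
Context {d : measure_display} {T : measurableType d} {R : realType}.

Definition sigma_ideal (I : set (set T)) : Prop :=
  [/\ I !=set0,
      I `<=` measurable,
      (forall F : (set T)^nat, (forall n, I (F n)) -> I (\bigcup_n F n)) &
      (forall B A, measurable B -> B `<=` A -> I A -> I B)].

Definition measure_finite (m : {measure set T -> \bar R}) : Prop :=
  m setT < +oo.

Definition measure_sigma_finite (m : {measure set T -> \bar R}) : Prop :=
  sigma_finite setT m.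

Definition sigma_principal (m : {measure set T -> \bar R}) : Prop :=
  forall I, sigma_ideal I ->
    exists2 L, I L & forall S, I S -> m (S `\` L) = 0.

Definition CCC (m : {measure set T -> \bar R}) : Prop :=
  forall F : set (set T),
    (forall A, F A -> measurable A /\ 0 < m A) ->
    (forall A B, F A -> F B -> A <> B -> A `&` B = set0) ->
    countable F.

Definition localizable (m : {measure set T -> \bar R}) : Prop :=
  forall I, sigma_ideal I ->
    exists2 L, measurable L &
      (forall S, I S -> m (S `\` L) = 0) /\
      (forall B, measurable B -> (forall S, I S -> m (S `\` B) = 0) ->
         m (L `\` B) = 0).

End Defs.

(* Main.v *)
Require Import Defs.
From mathcomp Require Import all_boot all_order all_algebra.
From mathcomp Require Import all_classical all_reals all_analysis.

Local Open Scope ring_scope.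

Section Helpers.
Local Open Scope classical_set_scope.
Local Open Scope ereal_scope.
Context (d : measure_display) (T : measurableType d) (R : realType)
    (m : {measure set T -> \bar R}).
Import Order.TTheory GRing.Theory Num.Theory.

Lemma si_meas {I : set (set T)} {A : set T} : sigma_ideal I -> I A -> measurable A.
Proof. by case=> _ Im _ _; apply: Im. Qed.

Lemma si_sub {I : set (set T)} {A B : set T} : sigma_ideal I -> measurable B -> B `<=` A -> I A -> I B.
Proof. by case=> _ _ _ Is; apply: Is. Qed.

Lemma si_set0 {I : set (set T)} : sigma_ideal I -> I set0.
Proof.
move=> HI; case: (HI) => [[A IA] _ _ _].
exact: (si_sub HI measurable0 (sub0set A) IA).
Qed.

Lemma si_bigcup {I : set (set T)} (F : (set T)^nat) : sigma_ideal I -> (forall n, I (F n)) ->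
  I (\bigcup_n F n).
Proof. by case=> _ _ Iu _; apply: Iu. Qed.

Lemma si_setU {I : set (set T)} {A B : set T} : sigma_ideal I -> I A -> I B -> I (A `|` B).
Proof.
move=> HI IA IB.
have IF : I (\bigcup_n (if n is 0%N then A else B)).
  by apply: si_bigcup => // -[|n].
apply: (si_sub HI) _ _ IF.
  by apply: measurableU; [exact: si_meas HI IA | exact: si_meas HI IB].
by move=> x [Ax|Bx]; [exists 0%N | exists 1%N].
Qed.


Lemma fin_sf : measure_finite m -> measure_sigma_finite m.
Proof.
move=> hm; exists (fun _ => setT).
  by apply/seteqP; split=> y // _; exists 0%N.
by move=> n; split.
Qed.

Lemma sp_loc : sigma_principal m -> localizable m.
Proof.
move=> hP I HI; have [L IL HL] := hP I HI; exists L; first exact: si_meas HI IL.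
by split=> // B mB HB; exact: HB L IL.
Qed.

Lemma enum_countable (F : set (set T)) : countable F ->
  exists f : nat -> set T, F `<=` range f /\ forall n, F (f n) \/ f n = set0.
Proof.
move=> /countable_injP[g ginj].
have : forall n, exists A, (F A /\ g A = n) \/ (~ (exists B, F B /\ g B = n) /\ A = set0).
  move=> n; have [[B [FB gB]]|nB] := pselect (exists B, F B /\ g B = n).
    by exists B; left.
  by exists set0; right.
move=> /choice[f hf]; exists f; split.
  move=> A FA; exists (g A) => //.
  case: (hf (g A)) => [[FB gB]|[nB _]]; last by exfalso; apply nB; exists A.
  exact: (ginj _ _ (mem_set FB) (mem_set FA) gB).
by move=> n; case: (hf n) => [[]|[]]; [left|right].
Qed.

Lemma ccc_sp : CCC m -> sigma_principal m.
Proof.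
move=> hC I HI.
pose P (F : set (set T)) := (forall A, F A -> I A /\ 0 < m A) /\
  (forall A B, F A -> F B -> A <> B -> A `&` B = set0).
have [F0 [[F0I F0d] F0max]] : exists A, P A /\ forall B, A `<` B -> ~ P B.
  apply: Zorn_bigcup => G GP Gtot; split.
  - by move=> A [X GX XA]; exact: (GP X GX).1 A XA.
  - move=> A B [X GX XA] [Y GY YB] AB.
    have [XY|YX] := Gtot X Y GX GY.
    + exact: (GP Y GY).2 A B (XY _ XA) YB AB.
    + exact: (GP X GX).2 A B XA (YX _ YB) AB.
have cF0 : countable F0.
  apply: hC => [A /F0I [IA mA]|//]; split => //; exact: si_meas HI IA.
have [f [F0f fF0]] := enum_countable F0 cF0.
have IL : I (\bigcup_n f n).
  apply: si_bigcup => // n; case: (fF0 n) => [/F0I[]//|->]; exact: si_set0.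
exists (\bigcup_n f n) => // S IS; apply: contrapT => Sne.
set L := \bigcup_n f n.
have mS := si_meas HI IS.
have mL : measurable L := si_meas HI IL.
set C := S `\` L.
have mC : measurable C := measurableD mS mL.
have Cpos : 0 < m C by rewrite lt_def measure_ge0 andbT; apply/eqP.
have IC : I C by apply: (si_sub HI mC _ IS) => y [].
have CL : forall A, F0 A -> A `<=` L.
  by move=> A FA; case: (F0f _ FA) => n _ <- y fy; exists n.
apply: (F0max (F0 `|` [set C])).
  split; first by move=> A FA; left.
  move=> sub; have FC : F0 C by exact: sub C (or_intror erefl).
  have C0 : C = set0.
    by apply/seteqP; split=> y // Cy; case: (Cy) => _ nL; apply: nL; exact: CL _ FC _ Cy.
  by move: Cpos; rewrite C0 measure0 ltxx.
split.
  by move=> A [FA|->]; [exact: F0I | split].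
move=> A B [FA|->] [FB|->] AB.
- exact: F0d.
- by apply/seteqP; split=> y // [Ay [_ nL]]; apply: nL; exact: CL _ FA _ Ay.
- by apply/seteqP; split=> y // [[_ nL] By]; apply: nL; exact: CL _ FB _ By.
- by exfalso; apply: AB.
Qed.

Lemma sp_ccc : sigma_principal m -> CCC m.
Proof.
move=> hP F Fpos Fdis.
pose I := fun B : set T => measurable B /\ exists2 G : set (set T),
  countable G /\ G `<=` F & B `<=` \bigcup_(A in G) A.
have HI : sigma_ideal I.
  split.
  - exists set0; split; first exact: measurable0.
    by exists set0; [split; [exact: countable0 | exact: sub0set] | exact: sub0set].
  - by move=> B [].
  - move=> H HH.
    have /choice[G hG] : forall n, exists G : set (set T),
        (countable G /\ G `<=` F) /\ H n `<=` \bigcup_(A in G) A.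
      by move=> n; case: (HH n) => _ [G ? ?]; exists G.
    split; first by apply: bigcupT_measurable => n; case: (HH n).
    exists (\bigcup_n G n).
      split.
        by apply: bigcup_countable => // n _; exact: (hG n).1.1.
      by move=> A [n _ GA]; exact: (hG n).1.2 _ GA.
    move=> y [n _ Hy]; case: ((hG n).2 _ Hy) => A GA Ay; exists A => //; by exists n.
  - move=> B A mB BA [_ [G HG AG]]; split; first exact: mB.
    exists G; first exact: HG.
    exact: subset_trans BA AG.
have [L [_ [G [cG GF] LG]] HL] := hP I HI.
apply: (sub_countable _ cG); apply: subset_card_le => A FA.
apply: contrapT => nGA.
have [mA Apos] := Fpos A FA.
have IA : I A.
  split => //; exists [set A]; last by move=> y Ay; exists A.
  by split; [exact: countable1 | move=> ? ->].
have := HL A IA.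
have -> : A `\` L = A.
  apply/seteqP; split=> y; first by case.
  move=> Ay; split => // Ly; case: (LG _ Ly) => B GB By.
  have AB : A <> B by move=> AB; apply: nGA; rewrite AB.
  have : (A `&` B) y by [].
  by rewrite (Fdis A B FA (GF _ GB) AB).
by move=> A0; move: Apos; rewrite A0 ltxx.
Qed.


Lemma fin_part {I : set (set T)} (G : set T) : sigma_ideal I -> measurable G ->
  m G < +oo -> exists2 L, I L & forall S, I S -> m ((S `\` L) `&` G) = 0.
Proof.
move=> HI mG Gfin.
pose V := [set m (S `&` G) | S in I].
pose s := ereal_sup V.
have s0 : 0 <= s.
  apply: ereal_sup_ubound; exists set0; first exact: si_set0 HI.
  by rewrite set0I measure0.
have sG : s <= m G.
  by apply: ge_ereal_sup => _ [S IS <-]; exact: measureIr (si_meas HI IS) mG.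
have Gfn : m G \is a fin_num by rewrite ge0_fin_numE.
have sfin : s \is a fin_num by rewrite ge0_fin_numE // (le_lt_trans sG).
have Hk : forall k : nat, exists S, I S /\ s - (k.+1%:R^-1)%:E < m (S `&` G).
  move=> k.
  have [_ [S IS <-] hS] := @ub_ereal_sup_adherent R V (k.+1%:R^-1)
    ltac:(by rewrite invr_gt0 ltr0Sn) sfin.
  by exists S.
have [Sk HSk] := choice Hk.
have IL : I (\bigcup_k Sk k) by apply: si_bigcup => // k; case: (HSk k).
exists (\bigcup_k Sk k) => // S IS.
set L := \bigcup_k Sk k.
have mS := si_meas HI IS.
have mL : measurable L := si_meas HI IL.
have mSLG : measurable ((S `\` L) `&` G) by apply: measurableI => //; exact: measurableD.
have mLG : measurable (L `&` G) by exact: measurableI.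
set x := m ((S `\` L) `&` G).
set a := m (L `&` G).
have hx : x + a <= s.
  rewrite /x /a -measureU //; last first.
    by apply/seteqP; split=> y // [[[_ nL] _] [Ly _]].
  apply: ereal_sup_ubound; exists (S `|` L); first exact: si_setU.
  congr (m _); apply/seteqP; split=> y.
    by move=> [[Sy|Ly] Gy]; have [Ly'|nLy] := pselect (L y);
      [right | left | right | right].
  by move=> [[[Sy _] Gy]|[Ly Gy]]; split => //; [left | right].
have x0 : 0 <= x := measure_ge0 _ _.
have aG : a <= m G by exact: measureIr.
have afin : a \is a fin_num by rewrite ge0_fin_numE; [exact: le_lt_trans aG Gfin | exact: measure_ge0].
have xG : x <= m G by exact: measureIr (measurableD mS mL) mG.
have xfin : x \is a fin_num by rewrite ge0_fin_numE; [exact: le_lt_trans xG Gfin | exact: measure_ge0].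
apply/eqP; rewrite eq_le x0 andbT leNgt; apply/negP => xpos.
rewrite -(fineK xfin) lte_fin in xpos.
have [k hk] := ltr_add_invr xpos.
rewrite add0r in hk.
case: (HSk k) => _ hSk.
have Ska : m (Sk k `&` G) <= a.
  apply: le_measure; rewrite ?inE.
  - by apply: measurableI => //; case: (HSk k) => /(si_meas HI).
  - exact: mLG.
  - by move=> y [Sy Gy]; split => //; exists k.
have : s < a + (k.+1%:R^-1)%:E.
  by rewrite -lteBlDr //; exact: lt_le_trans hSk Ska.
move=> /(le_lt_trans hx); rewrite addeC lteD2lE // -(fineK xfin) lte_fin.
by move=> /(lt_trans hk); rewrite ltxx.
Qed.

Lemma sf_sp : measure_sigma_finite m -> sigma_principal m.
Proof.
case=> F FT HF I HI.
have /choice[L HL] : forall n, exists L, I L /\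
    forall S, I S -> m ((S `\` L) `&` F n) = 0.
  move=> n; have [L IL HL] := fin_part (F n) HI (HF n).1 (HF n).2.
  by exists L.
exists (\bigcup_n L n); first by apply: si_bigcup => // n; case: (HL n).
move=> S IS; apply/eqP; rewrite eq_le measure_ge0 andbT.
have mS := si_meas HI IS.
have mL : forall n, measurable (L n) by move=> n; case: (HL n) => /(si_meas HI).
apply: (le_trans (measure_sigma_subadditive m
  (F := fun n => (S `\` L n) `&` F n) _ _ _)).
- by move=> n; apply: measurableI; [exact: measurableD | exact: (HF n).1].
- apply: measurableD => //; exact: bigcupT_measurable.
- move=> y [Sy nL].
  have : [set: T] y by [].
  rewrite FT => -[n _ Fy]; exists n => //; split => //; split => // Ly.
  by apply: nL; exists n.
rewrite eseries0 // => n _ _; by case: (HL n) => _ ->.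
Qed.

End Helpers.

Theorem theoremA1 (d : measure_display) (T : measurableType d) (R : realType)
    (m : {measure set T -> \bar R}) :
  [/\ (measure_finite m -> measure_sigma_finite m),
      (measure_sigma_finite m -> sigma_principal m),
      (sigma_principal m -> CCC m),
      (CCC m -> localizable m) &
      (CCC m -> sigma_principal m)].
Proof.
split.
- exact: fin_sf.
- exact: sf_sp.
- exact: sp_ccc.
- by move=> h; apply: sp_loc; exact: ccc_sp.
- exact: ccc_sp.
Qed.
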